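(* Let $p$ be a prime, $A$ a torsion-free $\mathbb{Z}_{(p)}$-algebra, $\mathfrak a\subseteq A$ a divided-power ideal, $P,Q\in A[X]$ monic, and $N\ge1$. If $p_n(P)\equiv p_n(Q)\pmod{n\mathfrak a}$ for all $1\le n\le N$, then $e_n(P)\equiv e_n(Q)\pmod{\mathfrak a}$ for all $1\le n\le N$.
   Context: An ideal $\mathfrak a$ of a torsion-free $\mathbb{Z}_{(p)}$-algebra $A$ is a divided-power ideal if $a^p\in p\,\mathfrak a$ for all $a\in\mathfrak a$ (equivalently $a^k/k!\in\mathfrak a$ in $A\otimes\mathbb{Q}$ for all $a\in\mathfrak a$, $k\ge1$). For a monic $P=X^d+a_1X^{d-1}+\dots+a_d\in A[X]$: $e_0(P)=1$, $e_n(P)=(-1)^na_n$ for $1\le n\le d$, $e_n(P)=0$ for $n>d$; and $p_n(P)$ for $n\ge1$ is defined by Newton's identities $p_n(P)=\sum_{i=1}^{n-1}(-1)^{i-1}e_i(P)p_{n-i}(P)+(-1)^{n-1}n\,e_n(P)$ (for $A$ a domain, the $n$-th power sum of the roots of $P$ with multiplicity). $n\mathfrak a=\{na:a\in\mathfrak a\}$. *)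

(* Defs.v *)
From HB Require Import structures.
From mathcomp Require Import all_boot all_order all_algebra.
Set Implicit Arguments. Unset Strict Implicit. Unset Printing Implicit Defensive.
Import Order.TTheory GRing.Theory.
Local Open Scope ring_scope.

Section Defs.
Variable A : comNzRingType.

Definition Zp_local_algebra (p : nat) : Prop :=
  forall n : nat, ~~ (p %| n)%N -> exists b : A, n%:R * b = 1.

Definition torsion_free : Prop :=
  forall (n : nat) (a : A), (0 < n)%N -> n%:R * a = 0 -> a = 0.

Definition is_ideal (I : A -> Prop) : Prop :=
  [/\ I 0,
      forall x y, I x -> I y -> I (x + y) &
      forall r x, I x -> I (r * x)].

Definition dp_ideal (p : nat) (I : A -> Prop) : Prop :=
  is_ideal I /\ forall a, I a -> exists b, I b /\ a ^+ p = p%:R * b.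

Definition cong_mult (n : nat) (I : A -> Prop) (x y : A) : Prop :=
  exists b, I b /\ x - y = n%:R * b.

Definition cong_mod (I : A -> Prop) (x y : A) : Prop := I (x - y).

(* e_n(P) for P = X^d + a_1 X^(d-1) + ... + a_d : e_0 = 1 (P monic),
   e_n = (-1)^n a_n = (-1)^n P`_(d-n) for 1 <= n <= d, 0 for n > d. *)
Definition elem (P : {poly A}) (n : nat) : A :=
  if (n <= (size P).-1)%N then (-1) ^+ n * P`_((size P).-1 - n) else 0.

(* Newton's identities: given e and s = [:: p_1; ...; p_(n-1)], compute p_n. *)
Definition newton_step (e : nat -> A) (s : seq A) (n : nat) : A :=
  \sum_(1 <= i < n) (-1) ^+ (i - 1) * e i * nth 0 s (n - i - 1)
  + (-1) ^+ (n - 1) * n%:R * e n.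

(* psums e n = [:: p_1; ...; p_n]. *)
Fixpoint psums (e : nat -> A) (n : nat) : seq A :=
  match n with
  | 0 => [::]
  | n'.+1 => let s := psums e n' in rcons s (newton_step e s n'.+1)
  end.

Definition powsum (P : {poly A}) (n : nat) : A :=
  nth 0 (psums (elem P) n) n.-1.

End Defs.

(* Main.v *)
Require Import Defs.
From HB Require Import structures.
From mathcomp Require Import all_boot all_order all_algebra ring zify.
From Stdlib Require Import IndefiniteDescription.
Set Warnings "-notation-overridden,-ambiguous-paths".

Import GRing.Theory.
Local Open Scope ring_scope.

Lemma fact_part_aux (p m : nat) : prime p -> forall k, (k < p)%N ->
  exists Q, ~~ (p %| Q)%N /\ ((p * m + k)`! = (p * m)`! * Q)%N.
Proof.
move=> pp; elim=> [|k IH] lt.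
  by exists 1%N; rewrite addn0 muln1 dvdn1 neq_ltn (prime_gt1 pp) orbT.
have [Q [nQ eQ]] := IH (ltnW lt).
exists (Q * (p * m + k).+1)%N; split.
  rewrite Euclid_dvdM // negb_or nQ /= -addnS dvdn_addr ?dvdn_mulr //.
  apply/negP => /dvdn_leq; rewrite ltn0Sn => /(_ isT); by rewrite leqNgt lt.
by rewrite addnS factS eQ mulnC mulnA.
Qed.

Lemma fact_part (p m : nat) : prime p ->
  exists R, ~~ (p %| R)%N /\ ((p * m)`! = p^m * m`! * R)%N.
Proof.
move=> pp; elim: m => [|m [R [nR eR]]].
  by exists 1%N; rewrite muln0 dvdn1 neq_ltn (prime_gt1 pp) orbT.
have p0 : (0 < p)%N by apply: prime_gt0.
have [Q [nQ eQ]] := @fact_part_aux p m pp p.-1 (ltac:(by rewrite prednK) : (p.-1 < p)%N).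
exists (R * Q)%N; split; first by rewrite Euclid_dvdM // negb_or nR.
have -> : (p * m.+1 = (p * m + p.-1).+1)%N by rewrite -addnS prednK // mulnS addnC.
rewrite factS eQ eR -addnS prednK // factS expnS.
rewrite !mulnA; ring.
Qed.

Lemma dp_pow (p : nat) (A : comNzRingType) (I : A -> Prop) :
  prime p -> Zp_local_algebra A p -> dp_ideal p I ->
  forall n x, (0 < n)%N -> I x -> exists y, I y /\ x ^+ n = n`!%:R * y.
Proof.
move=> pp loc [[I0 Iadd Imul] Hp] n.
elim: n {-2}n (leqnn n) => [|n0 IH] n lenn x n0pos Ix; first by case: n lenn n0pos.
have [pn|npn] := boolP (p %| n)%N.
  set m := (n %/ p)%N.
  have en : n = (p * m)%N by rewrite mulnC divnK.
  have p1 := prime_gt1 pp.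
  have m0 : (0 < m)%N by move: n0pos; rewrite en muln_gt0 => /andP[].
  have mn : (m < n)%N by rewrite en -[X in (X < _)%N]mul1n ltn_pmul2r.
  have [h [Ih eh]] := Hp x Ix.
  have [y [Iy ey]] := IH m (leq_trans mn lenn : (m <= n0)%N) h m0 Ih.
  have [R [nR eR]] := @fact_part p m pp.
  have [u eu] := loc R nR.
  exists (u * y); split; first exact: Imul.
  transitivity (x ^+ n * (R%:R * u)); first by rewrite eu mulr1.
  rewrite en exprM eh exprMn ey eR !natrM natrX; ring.
case: n lenn n0pos npn => [//|k] lenn _ npn.
have [u eu] := loc _ npn.
case: k lenn npn eu => [|k] lenn npn eu.
  by exists x; split => //; rewrite expr1 mul1r.
have [y [Iy ey]] := IH k.+1 (lenn : (k.+1 <= n0)%N) x isT Ix.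
exists (u * (x * y)); split; first exact: Imul _ _ (Imul _ _ Iy).
transitivity ((k.+2%:R * u) * x ^+ k.+2); first by rewrite eu mul1r.
rewrite exprS ey (factS k.+1) natrM; ring.
Qed.

Lemma dp_seq (p : nat) (A : comNzRingType) (I : A -> Prop) :
  prime p -> Zp_local_algebra A p -> torsion_free A -> dp_ideal p I ->
  forall d, I d -> exists g : nat -> A, [/\ g 0%N = 1,
    (forall k, (0 < k)%N -> I (g k)) &
    (forall k, k.+1%:R * g k.+1 = d * g k)].
Proof.
move=> pp loc tf dp d Id.
have H : forall k, exists y, d ^+ k = k`!%:R * y /\ (k = 0%N -> y = 1) /\ ((0 < k)%N -> I y).
  case=> [|k]; first by exists 1; rewrite expr0 mulr1.
  have [y [Iy ey]] := @dp_pow p A I pp loc dp k.+1 d isT Id.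
  by exists y.
pose g k := proj1_sig (constructive_indefinite_description _ (H k)).
have gP k : d ^+ k = k`!%:R * g k /\ (k = 0%N -> g k = 1) /\ ((0 < k)%N -> I (g k)).
  exact: (proj2_sig (constructive_indefinite_description _ (H k))).
exists g; split.
- by case: (gP 0%N) => _ [-> ].
- by move=> k k0; case: (gP k) => _ [_ H1]; exact: H1.
move=> k; apply/eqP; rewrite -subr_eq0; apply/eqP.
apply: (tf k`! ); first exact: fact_gt0.
case: (gP k) => ek _; case: (gP k.+1) => ek1 _.
rewrite mulrBr mulrA -natrM mulnC -factS -ek1 exprS ek; ring.
Qed.

Definition eqm (A : comNzRingType) (N : nat) (U V : {poly A}) :=
  forall i, (i <= N)%N -> U`_i = V`_i.
Arguments eqm {A}.

Lemma eqm_refl (A : comNzRingType) N (U : {poly A}) : eqm N U U.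
Proof. by []. Qed.

Lemma eqm_add (A : comNzRingType) N (U U' V V' : {poly A}) :
  eqm N U U' -> eqm N V V' -> eqm N (U + V) (U' + V').
Proof. by move=> h1 h2 i hi; rewrite !coefD h1 ?h2. Qed.

Lemma eqm_opp (A : comNzRingType) N (U U' : {poly A}) :
  eqm N U U' -> eqm N (- U) (- U').
Proof. by move=> h1 i hi; rewrite !coefN h1. Qed.

Lemma eqm_mul (A : comNzRingType) N (U U' V V' : {poly A}) :
  eqm N U U' -> eqm N V V' -> eqm N (U * V) (U' * V').
Proof.
move=> h1 h2 i hi; rewrite !coefM; apply: eq_bigr => k _.
have hk : (k <= N)%N by apply: leq_trans hi; rewrite -ltnS.
by rewrite h1 // h2 // (leq_trans (leq_subr _ _) hi).
Qed.

Lemma eqm_trans (A : comNzRingType) N (U V W : {poly A}) :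
  eqm N U V -> eqm N V W -> eqm N U W.
Proof. by move=> h1 h2 i hi; rewrite h1 ?h2. Qed.

Definition newton (A : comNzRingType) N (T Pi : {poly A}) :=
  eqm N ('X * T^`()) (- (T * Pi)).
Arguments newton {A}.

Lemma newton_uniq (A : comNzRingType) N (S T Pi : {poly A}) :
  torsion_free A -> newton N S Pi -> newton N T Pi -> Pi`_0 = 0 ->
  S`_0 = T`_0 -> forall n, (n <= N)%N -> S`_n = T`_n.
Proof.
move=> tf hS hT P0 e0 n.
elim: n {-2}n (leqnn n) => [|m IH] n lenm hn; first by case: n lenm hn.
case: n lenm hn => [//|n] lenm hn.
have := hS _ hn; have := hT _ hn.
rewrite !coefXM /= !coef_deriv !coefN !coefM !(big_ord_recr n.+1) /= subnn P0 !mulr0 !addr0.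
have -> : \sum_(i < n.+1) S`_i * Pi`_(n.+1 - i) = \sum_(i < n.+1) T`_i * Pi`_(n.+1 - i).
  apply: eq_bigr => i _; rewrite IH //; first by rewrite -ltnS (leq_trans (ltn_ord i) lenm).
  by apply: leq_trans hn; apply: ltnW; apply: ltn_ord.
move=> <- h; apply/eqP; rewrite -subr_eq0; apply/eqP.
apply: (tf n.+1) => //; rewrite mulrBr !mulr_natl h subrr //.
Qed.

Arguments eqm_refl {A}.
Arguments eqm_add {A N U U' V V'}.
Arguments eqm_opp {A N U U'}.
Arguments eqm_mul {A N U U' V V'}.
Arguments eqm_trans {A N U V W}.
Arguments newton_uniq {A N S T Pi}.

Lemma eqm_eq (A : comNzRingType) N (U V : {poly A}) : U = V -> eqm N U V.
Proof. by move=> ->. Qed.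

Lemma newton_mul (A : comNzRingType) N (T Pi E : {poly A}) c j :
  newton N T Pi -> eqm N ('X * E^`()) (c%:P * 'X^j * E) ->
  newton N (T * E) (Pi - c%:P * 'X^j).
Proof.
move=> hT hE; rewrite /newton.
apply: (@eqm_trans _ _ _ (('X * T^`()) * E + T * ('X * E^`()))).
  by apply: eqm_eq; rewrite derivM; ring.
apply: (eqm_trans (eqm_add (eqm_mul hT (eqm_refl N E)) (eqm_mul (eqm_refl N T) hE))).
by apply: eqm_eq; ring.
Qed.

Lemma exp_poly (A : comNzRingType) (I : A -> Prop) N j d (g : nat -> A) :
  (0 < j)%N -> I 0 -> g 0%N = 1 -> (forall k, (0 < k)%N -> I (g k)) ->
  (forall k, k.+1%:R * g k.+1 = d * g k) ->
  let E := \poly_(i < N.+1 * j) (if (j %| i)%N then g (i %/ j)%N else 0) in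
  [/\ E`_0 = 1, (forall i, (0 < i)%N -> I E`_i) &
      eqm N ('X * E^`()) ((j%:R * d)%:P * 'X^j * E)].
Proof.
move=> j0 I0 g0 Ig rec E.
have bnd x : (x <= N)%N -> (x < N.+1 * j)%N.
  by move=> hx; apply: leq_trans (leq_pmulr _ j0); rewrite ltnS.
have cE x : (x <= N)%N -> E`_x = if (j %| x)%N then g (x %/ j)%N else 0.
  by move=> hx; rewrite coef_poly bnd.
split.
- by rewrite coef_poly muln_gt0 j0 /= dvdn0 div0n g0.
- move=> i i0; rewrite coef_poly; case: ifP => // _; case: ifP => // dj.
  by apply: Ig; rewrite divn_gt0 // dvdn_leq.
move=> i hi; rewrite coefXM -mulrA coefCM coefXnM.
case: i hi => [|i] hi; first by rewrite /= j0 mulr0.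
rewrite /= coef_deriv.
case: ltnP => ij.
  rewrite cE //; case: ifP; last by rewrite mul0rn mulr0.
  by move/(dvdn_leq (ltn0Sn i)); rewrite leqNgt ij.
have ei : i.+1 = ((i.+1 - j) + j)%N by rewrite subnK.
rewrite cE // cE; last by apply: leq_trans hi; apply: leq_subr.
rewrite {1 2}ei dvdn_addl //; case: ifP => dj; last by rewrite mul0rn mulr0.
set k := ((i.+1 - j) %/ j)%N.
have ek : (i.+1 - j = k * j)%N by rewrite divnK.
rewrite ek [(k * j + j)%N]addnC -mulSn mulnK // ei ek [(k * j + j)%N]addnC -mulSn -[LHS]mulr_natl natrM.
transitivity (j%:R * (k.+1%:R * g k.+1)); first by ring.
by rewrite rec; ring.
Qed.

Definition ps (A : comNzRingType) (e : nat -> A) k := nth 0 (psums e k) k.-1.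
Arguments ps {A}.

Lemma size_psums (A : comNzRingType) (e : nat -> A) m : size (psums e m) = m.
Proof. by elim: m => //= m IH; rewrite size_rcons IH. Qed.

Lemma psums_nth (A : comNzRingType) (e : nat -> A) m k :
  (k < m)%N -> nth 0 (psums e m) k = ps e k.+1.
Proof.
elim: m => // m IH; rewrite ltnS leq_eqVlt => /orP[/eqP ->|lt].
  by [].
by rewrite /= nth_rcons size_psums lt IH.
Qed.

Lemma ps_step (A : comNzRingType) (e : nat -> A) m :
  ps e m.+1 = \sum_(j < m) (-1) ^+ j * e j.+1 * ps e (m - j)
              + (-1) ^+ m * m.+1%:R * e m.+1.
Proof.
rewrite /ps /= nth_rcons size_psums ltnn eqxx /newton_step subn1 /=.
congr (_ + _); rewrite (big_addn 0 m.+1 1) subn1 /= big_mkord; apply: eq_bigr => j _.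
have hj : (m.+1 - (j + 1) - 1 < m)%N by have := ltn_ord j; lia.
rewrite psums_nth // addn1 subn1 /=.
have -> : ((m.+1 - j.+1 - 1).+1 = m - j)%N by have := ltn_ord j; lia.
by [].
Qed.

Definition Spol (A : comNzRingType) N (e : nat -> A) : {poly A} :=
  \poly_(i < N.+1) ((-1) ^+ i * e i).
Definition Ppol (A : comNzRingType) N (e : nat -> A) : {poly A} :=
  \poly_(i < N.+1) (if i == 0%N then 0 else ps e i).
Arguments Spol {A} : simpl never. Arguments Ppol {A} : simpl never.

Lemma cS (A : comNzRingType) N (e : nat -> A) i : (i <= N)%N ->
  (Spol N e)`_i = (-1) ^+ i * e i.
Proof. by move=> h; rewrite /Spol coef_poly ltnS h. Qed.

Lemma cP (A : comNzRingType) N (e : nat -> A) i : (i <= N)%N ->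
  (Ppol N e)`_i = if i == 0%N then 0 else ps e i.
Proof. by move=> h; rewrite /Ppol coef_poly ltnS h. Qed.

Lemma newton_e (A : comNzRingType) N (e : nat -> A) : e 0%N = 1 ->
  newton N (Spol N e) (Ppol N e).
Proof.
move=> e0 n hn; rewrite coefXM coefN coefM.
case: n hn => [|m] hn.
  by rewrite big_ord1 cP // eqxx mulr0 oppr0.
rewrite [LHS]/= coef_deriv cS //.
rewrite big_ord_recr /= subnn cP // eqxx mulr0 addr0 big_ord_recl /= subn0 cS // cP //.
rewrite /= mul1r.
have -> : \sum_(i < m) (Spol N e)`_(bump 0 i) * (Ppol N e)`_(m.+1 - bump 0 i) =
  - \sum_(j < m) (-1) ^+ j * e j.+1 * ps e (m - j).
  rewrite -sumrN; apply: eq_bigr => j _.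
  have hj := ltn_ord j.
  rewrite /bump /= add1n subSS cS; last by lia.
  rewrite cP; last by lia.
  rewrite (_ : (m - j == 0)%N = false); last by apply/idP; lia.
  by rewrite exprS; ring.
rewrite -mulr_natl e0 mul1r ps_step exprS; ring.
Qed.

Lemma main_seq (p : nat) (A : comNzRingType) (I : A -> Prop) N (eP eQ : nat -> A) :
  prime p -> Zp_local_algebra A p -> torsion_free A -> dp_ideal p I ->
  eP 0%N = 1 -> eQ 0%N = 1 ->
  (forall n, (1 <= n <= N)%N -> exists b, I b /\ ps eP n - ps eQ n = n%:R * b) ->
  forall n, (n <= N)%N -> I ((Spol N eP)`_n - (Spol N eQ)`_n).
Proof.
move=> pp loc tf dp eP0 eQ0 hyp.
have [[I0 Iadd Imul] _] := dp.
have Isum (n : nat) (F : 'I_n -> A) : (forall i, I (F i)) -> I (\sum_(i < n) F i).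
  by move=> h; apply: big_ind.
have claim : forall j, (j <= N)%N -> exists T Pi : {poly A}, T`_0 = 1 /\ Pi`_0 = 0 /\ newton N T Pi /\
    (forall i, (i <= N)%N -> I (T`_i - (Spol N eQ)`_i)) /\
    (forall i, (0 < i <= j)%N -> Pi`_i = (Ppol N eP)`_i) /\
    (forall i, (j < i <= N)%N -> Pi`_i = (Ppol N eQ)`_i).
  elim=> [_|j IH hj].
    exists (Spol N eQ), (Ppol N eQ); split; [|split; [|split; [|split; [|split]]]].
    - by rewrite cS // expr0 mul1r.
    - by rewrite cP.
    - exact: newton_e.
    - by move=> i _; rewrite subrr.
    - by move=> i; case: i => // i; rewrite andbF.
    - by [].
  have [T [Pi [T0 [Pi0 [hT [hI [hP hQ]]]]]]] := IH (ltnW hj).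
  have [b [Ib eb]] := hyp j.+1 hj.
  have Inb : I (- b) by rewrite -mulN1r; apply: Imul.
  have [g [g0 Ig rec]] := @dp_seq p A I pp loc tf dp (- b) Inb.
  have [E0 IE hE] := @exp_poly A I N j.+1 (- b) g isT I0 g0 Ig rec.
  set E := \poly_(i < _) _ in E0 IE hE.
  exists (T * E), (Pi - (j.+1%:R * - b)%:P * 'X^(j.+1)); split; [|split; [|split; [|split; [|split]]]].
  - by rewrite coef0M T0 E0 mulr1.
  - by rewrite coefB coefCM coefXn Pi0 /= mulr0 subr0.
  - exact: newton_mul.
  - move=> i hi.
    have -> : (T * E)`_i - (Spol N eQ)`_i =
      \sum_(k < i) T`_k * E`_(i - k) + (T`_i - (Spol N eQ)`_i).
      by rewrite coefM big_ord_recr /= subnn E0 mulr1 addrA.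
    apply: Iadd; last exact: hI.
    apply: Isum => k; apply: Imul; apply: IE.
    by rewrite subn_gt0.
  - move=> i /andP[i0 hi]; rewrite coefB coefCM coefXn.
    case: (i =P j.+1) => [->|ne].
      rewrite mulr1 hQ; last by rewrite ltnSn hj.
      rewrite !cP // /=.
      by move/eqP: eb; rewrite subr_eq => /eqP ->; rewrite mulrN opprK addrC.
    rewrite mulr0 subr0 hP // i0 /=.
    by rewrite leq_eqVlt ltnS in hi; case/orP: hi => // /eqP.
  - move=> i /andP[ji hi]; rewrite coefB coefCM coefXn.
    rewrite (_ : (i == j.+1) = false) ?mulr0 ?subr0; last by apply/eqP => e; rewrite e ltnn in ji.
    by rewrite hQ // hi andbT ltnW.
move=> n hn.
have [T [Pi [T0 [Pi0 [hT [hI [hP hQ]]]]]]] := claim N (leqnn N).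
have hPi : eqm N Pi (Ppol N eP).
  move=> i hi; case: i hi => [|i] hi; first by rewrite Pi0 cP.
  by apply: hP.
have hT' : newton N T (Ppol N eP).
  exact: eqm_trans hT (eqm_opp (eqm_mul (eqm_refl N T) hPi)).
have eT := newton_uniq tf (@newton_e A N eP eP0) hT' _ _ n hn.
rewrite eT //; first exact: hI.
- by rewrite cP.
- by rewrite cS // expr0 mul1r T0.
Qed.

Lemma elem0 (A : comNzRingType) (P : {poly A}) : P \is monic -> elem P 0 = 1.
Proof. by move=> hP; rewrite /elem /= expr0 mul1r subn0 -lead_coefE (monicP hP). Qed.

Theorem proposition2p10 (p : nat) (A : comNzRingType) (I : A -> Prop)
    (P Q : {poly A}) (N : nat) :
  prime p -> Zp_local_algebra A p -> torsion_free A -> dp_ideal p I ->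
  P \is monic -> Q \is monic -> (1 <= N)%N ->
  (forall n : nat, (1 <= n <= N)%N -> cong_mult n I (powsum P n) (powsum Q n)) ->
  forall n : nat, (1 <= n <= N)%N -> cong_mod I (elem P n) (elem Q n).
Proof.
move=> pp loc tf dp hP hQ _ hyp n /andP[_ hn].
have := @main_seq p A I N (elem P) (elem Q) pp loc tf dp (@elem0 A P hP) (@elem0 A Q hQ) hyp n hn.
have [[_ _ Imul] _] := dp.
rewrite !cS // => h.
have s : (-1) ^+ n * (-1) ^+ n = 1 :> A by rewrite -exprMn mulrNN mulr1 expr1n.
have := Imul ((-1) ^+ n) _ h.
rewrite /cong_mod; congr I.
transitivity ((-1) ^+ n * (-1) ^+ n * (elem P n - elem Q n)); first by ring.
by rewrite s mul1r.
Qed.
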